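(* Every $2$-dimensional real Banach space has the $\mathbf{L}_{p,p}$-nu.
   Context: For a Banach space $X$: $\Pi(X)=\{(x,x^* )\in S_X\times S_{X^*}: x^*(x)=1\}$; for $T\in\mathcal{L}(X)$ (bounded linear operators on $X$), $v(T)=\sup\{|x^*(Tx)|:(x,x^* )\in\Pi(X)\}$. $X$ has the $\mathbf{L}_{p,p}$-nu if for every $\varepsilon>0$ and $(x,x^* )\in\Pi(X)$ there is $\eta(\varepsilon,(x,x^* ))>0$ such that whenever $T\in\mathcal{L}(X)$ with $v(T)=1$ satisfies $|x^*(Tx)|>1-\eta(\varepsilon,(x,x^* ))$, there is $S\in\mathcal{L}(X)$ with $v(S)=1$, $|x^*(Sx)|=1$ and $\|S-T\|<\varepsilon$. *)

(* Defs.v *)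
From HB Require Import structures.
From mathcomp Require Import all_boot all_order all_algebra.
From mathcomp Require Import all_classical all_reals topology normedtype.
Set Implicit Arguments. Unset Strict Implicit. Unset Printing Implicit Defensive.
Import Order.TTheory GRing.Theory Num.Theory.
Import numFieldNormedType.Exports.
Local Open Scope classical_set_scope.
Local Open Scope ring_scope.

Section Defs.
Variables (R : realType) (V : normedModType R).

Definition dim2 : Prop :=
  exists e1 e2 : V, forall x : V,
    exists! ab : R * R, x = ab.1 *: e1 + ab.2 *: e2.

Definition is_functional (f : V -> R) : Prop :=
  (forall (a : R) (x y : V), f (a *: x + y) = a * f x + f y) /\
  (exists C : R, forall x : V, `|f x| <= C * `|x|).

Definition dual_norm (f : V -> R) : R :=
  sup [set `|f x| | x in [set x : V | `|x| <= 1]].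

Definition is_operator (T : V -> V) : Prop :=
  (forall (a : R) (x y : V), T (a *: x + y) = a *: T x + T y) /\
  (exists C : R, forall x : V, `|T x| <= C * `|x|).

Definition op_norm (T : V -> V) : R :=
  sup [set `|T x| | x in [set x : V | `|x| <= 1]].

Definition in_Pi (x : V) (f : V -> R) : Prop :=
  `|x| = 1 /\ is_functional f /\ dual_norm f = 1 /\ f x = 1.

Definition num_radius (T : V -> V) : R :=
  sup [set `|p.2 (T p.1)| | p in [set p : V * (V -> R) | in_Pi p.1 p.2]].

Definition has_Lpp_nu : Prop :=
  forall eps : R, 0 < eps ->
  forall (x : V) (f : V -> R), in_Pi x f ->
  exists eta : R, 0 < eta /\
    forall T : V -> V, is_operator T -> num_radius T = 1 ->
      1 - eta < `|f (T x)| ->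
      exists S : V -> V, is_operator S /\ num_radius S = 1 /\
        `|f (S x)| = 1 /\ op_norm (fun y => S y - T y) < eps.

End Defs.

(* Main.v *)
Require Import Defs.
From mathcomp Require Import all_boot all_order all_algebra.
From mathcomp Require Import all_classical all_reals topology normedtype.
From mathcomp Require Import derive.
Set Implicit Arguments. Unset Strict Implicit. Unset Printing Implicit Defensive.
Import Order.TTheory GRing.Theory Num.Theory.
Import numFieldNormedType.Exports.
Local Open Scope classical_set_scope.
Local Open Scope ring_scope.
Lemma lip_cont (R : realType) (X : normedModType R) (g : X -> R) (L : R) :
  (forall x y, `|g x - g y| <= L * `|x - y|) -> continuous g.
Proof.
move=> H x; apply/cvgrPdist_lt => e e0.
have L1 : 0 < `|L| + 1 by rewrite ltr_pwDr // normr_ge0.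
near=> y.
have Hxy := H x y.
apply: le_lt_trans Hxy _.
apply: (le_lt_trans (ler_wpM2r (normr_ge0 _) (ler_norm L))).
have LL : `|L| <= `|L| + 1 by rewrite lerDl.
apply: (le_lt_trans (ler_wpM2r (normr_ge0 _) LL)).
rewrite -ltr_pdivlMl //.
near: y. apply: (@cvgr_dist_lt _ _ _ _ _ id x (@cvg_id _ _)).
by rewrite mulr_gt0 // invr_gt0.
Unshelve. all: by end_near.
Qed.

Lemma bset (R : realType) n (A : set 'rV[R]_n) M :
  (forall a, A a -> `|a| <= M) -> bounded_set A.
Proof.
move=> H; exists M; split; first by rewrite num_real.
move=> y My a /H aM /=; exact: le_trans aM (ltW My).
Qed.

Lemma closed_geq (R : realType) n (g : 'rV[R]_n -> R) c :
  continuous g -> closed [set a | c <= g a].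
Proof.
move=> gc; apply: (@preimage_closed _ _ g [set x | c <= x]).
  by move=> x _; apply: gc.
exact: closed_ge.
Qed.

Lemma closed_leq (R : realType) n (g : 'rV[R]_n -> R) c :
  continuous g -> closed [set a | g a <= c].
Proof.
move=> gc; apply: (@preimage_closed _ _ g [set x | x <= c]).
  by move=> x _; apply: gc.
exact: closed_le.
Qed.

Lemma closed_eqq (R : realType) n (g : 'rV[R]_n -> R) c :
  continuous g -> closed [set a | g a = c].
Proof.
move=> gc; apply: (@preimage_closed _ _ g [set x | x = c]).
  by move=> x _; apply: gc.
exact: closed_eq.
Qed.

Section Abstract.
Variables (R : realType) (n : nat) (p : 'rV[R]_n -> R) (L : R).
Hypothesis pD : forall a b, p (a + b) <= p a + p b.
Hypothesis pZ : forall k a, p (k *: a) = `|k| * p a.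
Hypothesis pL : forall a, p a <= L * `|a|.

Lemma p0 : p 0 = 0.
Proof. by rewrite -(scale0r 0) pZ normr0 mul0r. Qed.

Lemma pN a : p (- a) = p a.
Proof. by rewrite -scaleN1r pZ normrN normr1 mul1r. Qed.

Lemma pge0 a : 0 <= p a.
Proof.
have := pD a (- a); rewrite subrr p0 pN => h.
by rewrite -(@pmulr_rge0 _ 2) // mulr2n mulrDl mul1r.
Qed.

Lemma pB a b : p a - p b <= p (a - b).
Proof. by rewrite lerBlDr; have := pD (a - b) b; rewrite subrK. Qed.

Lemma p_cont : continuous p.
Proof.
apply: (@lip_cont _ _ _ L) => x y.
rewrite ler_norml; apply/andP; split.
  rewrite lerNl opprB; apply: le_trans (pB _ _) _.
  by rewrite distrC; apply: pL.
by apply: le_trans (pB _ _) _; apply: pL.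
Qed.

Lemma Zclosed : closed [set z | p z = 0].
Proof. exact: closed_eqq p_cont. Qed.

Lemma Zadd z1 z2 : p z1 = 0 -> p z2 = 0 -> p (z1 + z2) = 0.
Proof.
move=> h1 h2; apply/eqP; rewrite eq_le pge0 andbT.
by apply: le_trans (pD _ _) _; rewrite h1 h2 addr0.
Qed.

Lemma Zscale k z : p z = 0 -> p (k *: z) = 0.
Proof. by move=> h; rewrite pZ h mulr0. Qed.

Lemma minimizer a : exists za, p za = 0 /\
  forall z, p z = 0 -> `|a - za| <= `|a - z|.
Proof.
pose A := [set z | p z = 0] `&` [set z | `|z| <= 2 * `|a|].
have A0 : A !=set0.
  by exists 0; split; rewrite /= ?p0 ?normr0 // mulr_ge0 // normr_ge0.
have cA : compact A.
  apply: bounded_closed_compact; first by apply: (@bset _ _ _ (2 * `|a|)) => z [].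
  apply: closedI; first exact: Zclosed.
  exact: closed_leq norm_continuous.
have fc : continuous (fun z : 'rV[R]_n => `|a - z|).
  apply: (@lip_cont _ _ _ 1) => x y; rewrite mul1r.
  apply: le_trans (ler_dist_dist _ _) _.
  by rewrite opprB addrC addrA subrK distrC.
have [c /set_mem [Zc cle] cmin] := EVT_min_rV A0 cA (continuous_subspaceT fc).
exists c; split => // z Zz.
have [zle|zgt] := leP `|z| (2 * `|a|).
  by apply: cmin; rewrite inE.
apply: (@le_trans _ _ `|a - 0|).
  by apply: cmin; rewrite inE; split; rewrite /= ?p0 ?normr0 // mulr_ge0.
rewrite subr0; apply: (@le_trans _ _ (`|z| - `|a|)).
  by rewrite lerBrDr -mulr2n -mulr_natl ltW.
by rewrite distrC lerB_dist.
Qed.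

End Abstract.
Section Abstract2.
Variables (R : realType) (n : nat) (p : 'rV[R]_n -> R) (L : R).
Hypothesis pD : forall a b, p (a + b) <= p a + p b.
Hypothesis pZ : forall k a, p (k *: a) = `|k| * p a.
Hypothesis pL : forall a, p a <= L * `|a|.

Lemma Zlemma : exists C, 0 < C /\
  forall a, exists z, p z = 0 /\ `|a - z| <= C * p a.
Proof.
pose K := [set b : 'rV[R]_n | `|b| = 1] `&`
   \bigcap_(z in [set z | p z = 0]) [set b | 1 <= `|b - z|].
have Kc : compact K.
  apply: bounded_closed_compact; first by apply: (@bset _ _ _ 1) => b [/= ->].
  apply: closedI; first exact: closed_eqq norm_continuous.
  apply: closed_bigI => z _; apply: closed_geq.
  apply: (@lip_cont _ _ _ 1) => x y; rewrite mul1r.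
  apply: le_trans (ler_dist_dist _ _) _.
  by rewrite opprB addrA subrK.
have key : forall a za, p za = 0 ->
    (forall z, p z = 0 -> `|a - za| <= `|a - z|) -> a - za != 0 ->
    K (`|a - za|^-1 *: (a - za)).
  move=> a za Zza zmin r0.
  have nr0 : 0 < `|a - za| by rewrite normr_gt0.
  split; first by rewrite /= normrZV // unitfE gt_eqF.
  move=> z Zz /=.
  have -> : `|a - za|^-1 *: (a - za) - z =
      `|a - za|^-1 *: (a - (za + `|a - za| *: z)).
    rewrite (scalerBr _ a (za + _)) (scalerDr _ za) scalerA mulVf ?gt_eqF //.
    by rewrite scale1r scalerBr opprD addrA.
  rewrite normrZ normfV normr_id ler_pdivlMl // mulr1.
  apply: zmin; apply: (Zadd pD pZ) => //; exact: (Zscale pZ).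
have [[k0 Kk0]|K0] := pselect (K !=set0).
  have [c /set_mem Kc0 cmin] := EVT_min_rV (ex_intro _ k0 Kk0) Kc
    (continuous_subspaceT (p_cont pD pL)).
  have pc0 : 0 < p c.
    rewrite lt_def pge0 // andbT; apply/negP => /eqP pc.
    case: Kc0 => _ /(_ c pc) /=; rewrite subrr normr0.
    by rewrite ler10.
  exists (p c)^-1; split; first by rewrite invr_gt0.
  move=> a; have [za [Zza zmin]] := minimizer pD pZ pL a.
  exists za; split => //.
  have [r0|r0] := eqVneq (a - za) 0.
    rewrite r0 normr0; apply: mulr_ge0; [by rewrite invr_ge0 ltW | exact: (pge0 pD pZ)].
  have Kb := key a za Zza zmin r0.
  have := cmin _ (mem_set Kb); rewrite pZ normfV normr_id => h.
  rewrite ler_pdivlMl //.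
  have nr0 : 0 < `|a - za| by rewrite normr_gt0.
  have h2 : p c * `|a - za| <= p (a - za).
    by rewrite -ler_pdivlMr // mulrC.
  apply: le_trans h2 _.
  by apply: le_trans (pD _ _) _; rewrite (pN pZ) Zza addr0.
exists 1; split => // a.
have [za [Zza zmin]] := minimizer pD pZ pL a.
exists za; split => //.
have [r0|r0] := eqVneq (a - za) 0.
  by rewrite r0 normr0 mul1r (pge0 pD pZ).
by exfalso; apply: K0; exists (`|a - za|^-1 *: (a - za)); apply: key.
Qed.

End Abstract2.
Section Abstract3.
Variables (R : realType) (n : nat) (p : 'rV[R]_n -> R) (L : R).
Hypothesis pD : forall a b, p (a + b) <= p a + p b.
Hypothesis pZ : forall k a, p (k *: a) = `|k| * p a.
Hypothesis pL : forall a, p a <= L * `|a|.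
Variables (l N : 'rV[R]_n -> R).
Hypothesis lD : forall a b, l (a + b) = l a + l b.
Hypothesis lp : forall a, `|l a| <= p a.
Hypothesis ND : forall a b, N (a + b) <= N a + N b.
Hypothesis NL : forall a, N a <= L * `|a|.

Lemma main_abs eps : 0 < eps -> exists eta, 0 < eta /\
  forall a, p a = 1 -> 1 - eta < `|l a| ->
  exists b, p b = 1 /\ `|l b| = 1 /\ N (b - a) < eps.
Proof.
move=> eps0.
have [C [C0 HC]] := Zlemma pD pZ pL.
pose F := [set s | p s = 1 /\ `|l s| = 1].
pose Bad := ([set a : 'rV[R]_n | `|a| <= C] `&` [set a | p a = 1]) `&`
   \bigcap_(s in F) [set a | eps <= N (s - a)].
have lB : forall a b, l (a - b) = l a - l b.
  by move=> a b; apply/eqP; rewrite eq_sym subr_eq -lD subrK.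
have lZ : forall a z, p z = 0 -> l (a - z) = l a.
  move=> a z Zz; rewrite lB.
  have : `|l z| <= 0 by rewrite -Zz lp.
  by rewrite normr_le0 => /eqP ->; rewrite subr0.
have pZ0 : forall a z, p z = 0 -> p (a - z) = p a.
  move=> a z Zz; apply/eqP; rewrite eq_le; apply/andP; split.
    by apply: le_trans (pD _ _) _; rewrite (pN pZ) Zz addr0.
  by have := pD (a - z) z; rewrite subrK Zz addr0.
have esc : forall a, p a = 1 ->
    (forall z, p z = 0 -> ~ Bad (a - z)) ->
    exists b, p b = 1 /\ `|l b| = 1 /\ N (b - a) < eps.
  move=> a pa1 nB.
  have [z [Zz az]] := HC a.
  have := nB z Zz; rewrite /Bad => nB'.
  have : ~ (\bigcap_(s in F) [set a | eps <= N (s - a)]) (a - z).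
    move=> H; apply: nB'; split => //; split; rewrite /= ?pZ0 //.
    by rewrite pa1 mulr1 in az.
  move=> /existsNP [s /not_implyP [[ps1 ls1] /negP]].
  rewrite -ltNge => hs.
  exists (s + z); split.
    by rewrite -(pZ0 _ z) // addrK.
  split.
    by rewrite -(lZ _ z) // addrK.
  by move: hs; rewrite opprB addrA.
have lcont : continuous (fun a => `|l a|).
  apply: (@lip_cont _ _ _ L) => x y.
  apply: le_trans (ler_dist_dist _ _) _.
  by rewrite -lB; apply: le_trans (lp _) (pL _).
have Bc : compact Bad.
  apply: bounded_closed_compact.
    by apply: (@bset _ _ _ C) => a [[]].
  apply: closedI; first apply: closedI.
  - exact: closed_leq norm_continuous.
  - exact: closed_eqq (p_cont pD pL).
  apply: closed_bigI => s _; apply: closed_geq.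
  apply: (@lip_cont _ _ _ L) => x y.
  rewrite ler_norml; apply/andP; split.
    rewrite lerNl opprB lerBlDl.
    have -> : s - y = (s - x) + (x - y) by rewrite addrA subrK.
    by apply: le_trans (ND _ _) _; rewrite lerD2l NL.
  rewrite lerBlDl.
  have -> : s - x = (s - y) + (y - x) by rewrite addrA subrK.
  by apply: le_trans (ND _ _) _; rewrite lerD2l distrC NL.
have [[b0 Bb0]|B0] := pselect (Bad !=set0).
  have [c /set_mem Bcc cmax] := EVT_max_rV (ex_intro _ b0 Bb0) Bc
    (continuous_subspaceT lcont).
  have lc1 : `|l c| < 1.
    case: Bcc => [[_ pc1] cF].
    rewrite lt_def -pc1 lp andbT; apply/negP => /eqP lc.
    have := cF c (conj pc1 (etrans (esym lc) pc1)); rewrite /= subrr.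
    apply/negP; rewrite -ltNge; apply: le_lt_trans (NL _) _.
    by rewrite normr0 mulr0.
  exists (1 - `|l c|); split; first by rewrite subr_gt0.
  move=> a pa1 la; apply: esc => // z Zz Bz.
  have := cmax _ (mem_set Bz); rewrite lZ //.
  by apply/negP; rewrite -ltNge; move: la; rewrite opprB addrC subrK.
exists 1; split => // a pa1 _; apply: esc => // z Zz Bz.
by apply: B0; exists (a - z).
Qed.

End Abstract3.
Lemma entry_le (R : realType) n (a : 'rV[R]_n) i : `|a ord0 i| <= `|a|.
Proof.
have /mapP[j Hj ->] : `|a ord0 i| \in [seq `|a x.1 x.2| | x : 'I_1 * 'I_n].
  by apply/mapP; exists (ord0, i) => //=; rewrite mem_enum.
by rewrite [leRHS]/Num.norm /= mx_normrE; apply/bigmax_geP; right => /=; exists j.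
Qed.

Lemma indep_bound (R : realType) (V : normedModType R) (u w : V) :
  (forall a b : R, a *: u + b *: w = 0 -> b = 0) ->
  exists d, 0 < d /\ forall a b : R, d * `|b| <= `|a *: u + b *: w|.
Proof.
move=> ind.
pose g := fun t : R => `|t *: u + w|.
have gc : continuous g.
  apply: (@lip_cont _ _ _ `|u|) => x y.
  apply: le_trans (ler_dist_dist _ _) _.
  have -> : x *: u + w - (y *: u + w) = (x - y) *: u.
    by rewrite scalerBl opprD addrACA subrr addr0.
  by rewrite normrZ mulrC.
pose M := 2 * `|w| / `|u|.
have M0 : 0 <= M by rewrite /M mulr_ge0 // ?invr_ge0 ?mulr_ge0.
have MM : - M <= M by rewrite lerNl (le_trans _ M0) // oppr_le0.
have [t0 t0in t0min] := EVT_min MM (continuous_subspaceT gc).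
have gmin : forall t, g t0 <= g t.
  move=> t; have [tM|tM] := leP `|t| M.
    by apply: t0min; rewrite in_itv /= -ler_norml.
  have z0 : 0 \in `[- M, M] by rewrite in_itv /= oppr_le0 M0.
  apply: le_trans (t0min 0 z0) _.
  rewrite /g scale0r add0r.
  have [->|u0] := eqVneq u 0; first by rewrite scaler0 add0r.
  have nu0 : 0 < `|u| by rewrite normr_gt0.
  have h : 2 * `|w| < `|t| * `|u| by rewrite -ltr_pdivrMr.
  apply: le_trans (lerB_normD (t *: u) w); rewrite normrZ.
  apply: ltW; rewrite ltrBrDr; apply: le_lt_trans h.
  by rewrite mulr2n mulrDl mul1r.
exists (g t0); split.
  rewrite /g lt_def normr_ge0 andbT normr_eq0; apply/negP => /eqP h.
  have : (1 : R) = 0 by apply: (ind t0); rewrite scale1r.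
  by move/eqP; rewrite oner_eq0.
move=> a b; have [->|b0] := eqVneq b 0; first by rewrite normr0 mulr0.
have -> : a *: u + b *: w = b *: ((a / b) *: u + w).
  by rewrite scalerDr scalerA mulrCA mulfV // mulr1.
by rewrite normrZ mulrC ler_pM2l ?normr_gt0 //; exact: gmin.
Qed.
Section Sups.
Variables (R : realType) (V : normedModType R).

Lemma func0 (g : V -> R) : is_functional g -> g 0 = 0.
Proof.
move=> [gL _]; have h := gL 1 0 0; rewrite scaler0 addr0 mul1r in h.
by have := congr1 (fun v => v - g 0) h; rewrite /= subrr addrK.
Qed.

Lemma funcZ (g : V -> R) k z : is_functional g -> g (k *: z) = k * g z.
Proof.
move=> gf; have := gf.1 k z 0; rewrite addr0 (func0 gf) addr0 //.
Qed.

Lemma funcD (g : V -> R) z z' : is_functional g -> g (z + z') = g z + g z'.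
Proof. by move=> gf; have := gf.1 1 z z'; rewrite scale1r mul1r. Qed.

Lemma dual_le (g : V -> R) : is_functional g -> dual_norm g = 1 ->
  forall z, `|g z| <= `|z|.
Proof.
move=> gf gn.
have ub : forall z : V, `|z| <= 1 -> `|g z| <= 1.
  move=> z z1; rewrite -gn; apply: ub_le_sup; last by exists z.
  have [C HC] := gf.2; exists `|C| => _ [w w1 <-].
  apply: le_trans (HC w) _; apply: le_trans (ler_wpM2r (normr_ge0 _) (ler_norm C)) _.
  by rewrite -{2}(mulr1 `|C|) ler_wpM2l.
move=> z; have [->|z0] := eqVneq z 0; first by rewrite (func0 gf) !normr0.
have nz : 0 < `|z| by rewrite normr_gt0.
have hz : z = `|z| *: (`|z|^-1 *: z) by rewrite scalerA mulfV ?gt_eqF // scale1r.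
have hz' : `| `|z|^-1 *: z| = 1 by rewrite normrZ normfV normr_id mulVf ?gt_eqF.
rewrite {1}hz (funcZ _ _ gf) normrM normr_id.
rewrite -[leRHS]mulr1 ler_pM2l //; apply: ub.
by rewrite hz'.
Qed.

Lemma Pi_le (T : V -> V) y g : in_Pi y g -> `|g (T y)| <= `|T y|.
Proof. by move=> [_ [gf [gn _]]]; apply: dual_le. Qed.

Lemma nr_ub (T : V -> V) B y g : (forall z, `|T z| <= B * `|z|) ->
  in_Pi y g -> `|g (T y)| <= num_radius T.
Proof.
move=> TB Pyg; apply: ub_le_sup; last by exists (y, g).
exists B => _ [[z h] Pzh <-] /=.
apply: le_trans (Pi_le T Pzh) _; apply: le_trans (TB z) _.
by case: Pzh => -> _; rewrite mulr1.
Qed.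

Lemma nr_le (T : V -> V) M (x0 : V) (f0 : V -> R) : in_Pi x0 f0 ->
  (forall y g, in_Pi y g -> `|g (T y)| <= M) -> num_radius T <= M.
Proof.
move=> P0 H; apply: ge_sup; first by exists `|f0 (T x0)|, (x0, f0).
by move=> _ [[z h] Pzh <-] /=; apply: H.
Qed.

Lemma opn_ub (T : V -> V) B y : (forall z, `|T z| <= B * `|z|) ->
  `|y| <= 1 -> `|T y| <= op_norm T.
Proof.
move=> TB y1; apply: ub_le_sup; last by exists y.
exists `|B| => _ [z z1 <-].
apply: le_trans (TB z) _; apply: le_trans (ler_wpM2r (normr_ge0 _) (ler_norm B)) _.
by rewrite -{2}(mulr1 `|B|) ler_wpM2l.
Qed.

Lemma opn_le (T : V -> V) M : (forall y, `|y| <= 1 -> `|T y| <= M) ->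
  op_norm T <= M.
Proof.
move=> H; apply: ge_sup; first by exists `|T 0|, 0; rewrite /= ?normr0.
by move=> _ [z z1 <-]; apply: H.
Qed.

End Sups.
Definition i0 : 'I_4 := @Ordinal 4 0 isT.
Definition i1 : 'I_4 := @Ordinal 4 1 isT.
Definition i2 : 'I_4 := @Ordinal 4 2 isT.
Definition i3 : 'I_4 := @Ordinal 4 3 isT.

Section Concrete.
Variables (R : realType) (V : normedModType R) (e1 e2 : V) (co : V -> R * R).
Hypothesis Hco : forall x, x = (co x).1 *: e1 + (co x).2 *: e2.
Hypothesis Huniq : forall x (ab : R * R), x = ab.1 *: e1 + ab.2 *: e2 -> co x = ab.

Definition c1 x := (co x).1.
Definition c2 x := (co x).2.

Lemma co_lin k x y : co (k *: x + y) = (k * c1 x + c1 y, k * c2 x + c2 y).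
Proof.
apply: Huniq => /=; rewrite {1}(Hco x) {1}(Hco y).
by rewrite scalerDr !scalerA addrACA -!scalerDl.
Qed.

Lemma c1_lin k x y : c1 (k *: x + y) = k * c1 x + c1 y.
Proof. by rewrite {1}/c1 co_lin. Qed.
Lemma c2_lin k x y : c2 (k *: x + y) = k * c2 x + c2 y.
Proof. by rewrite {1}/c2 co_lin. Qed.

Lemma indep a b : a *: e1 + b *: e2 = 0 -> a = 0 /\ b = 0.
Proof.
move=> h.
have h1 := @Huniq 0 (a, b) (esym h).
have h2 := @Huniq 0 (0, 0); rewrite /= !scale0r addr0 in h2.
by move: (h2 erefl); rewrite h1 => -[].
Qed.

Lemma cbound : exists K, 0 < K /\
  forall x, `|c1 x| <= K * `|x| /\ `|c2 x| <= K * `|x|.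
Proof.
have [d2 [d20 H2]] := @indep_bound _ _ e1 e2 (fun a b h => (indep h).2).
have [d1 [d10 H1]] := @indep_bound _ _ e2 e1
   (fun a b h => (@indep b a (etrans (addrC _ _) h)).1).
exists (d1^-1 + d2^-1); split; first by rewrite addr_gt0 // invr_gt0.
move=> x; split.
  apply: (@le_trans _ _ (d1^-1 * `|x|)); last first.
    by rewrite ler_wpM2r // lerDl invr_ge0 ltW.
  rewrite ler_pdivlMl // {2}(Hco x) addrC; exact: H1.
apply: (@le_trans _ _ (d2^-1 * `|x|)); last first.
  by rewrite ler_wpM2r // lerDr invr_ge0 ltW.
rewrite ler_pdivlMl // {2}(Hco x); exact: H2.
Qed.

From mathcomp Require Import ring.
Variables (K : R) (K0 : 0 < K).
Hypothesis HK : forall x, `|c1 x| <= K * `|x| /\ `|c2 x| <= K * `|x|.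

Definition op (m : 'rV[R]_4) (y : V) : V :=
  (c1 y * m ord0 i0 + c2 y * m ord0 i2) *: e1 +
  (c1 y * m ord0 i1 + c2 y * m ord0 i3) *: e2.

Lemma opD a b y : op (a + b) y = op a y + op b y.
Proof.
rewrite /op !mxE addrACA -!scalerDl.
by congr (_ *: _ + _ *: _); ring.
Qed.

Lemma opZ k a y : op (k *: a) y = k *: op a y.
Proof.
rewrite /op !mxE scalerDr !scalerA.
by congr (_ *: _ + _ *: _); ring.
Qed.

Lemma opB a b y : op (b - a) y = op b y - op a y.
Proof. by rewrite opD; congr (_ + _); rewrite -scaleN1r opZ scaleN1r. Qed.

Lemma opL a k y y' : op a (k *: y + y') = k *: op a y + op a y'.
Proof.
rewrite /op c1_lin c2_lin scalerDr !scalerA addrACA -!scalerDl.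
by congr (_ *: _ + _ *: _); ring.
Qed.

Definition Lop := 2 * K * (`|e1| + `|e2|).

Lemma Lop_ge0 : 0 <= Lop.
Proof. by rewrite /Lop !mulr_ge0 ?addr_ge0 // ltW. Qed.

Lemma coef_bound (a : 'rV[R]_4) y (i j : 'I_4) :
  `|c1 y * a ord0 i + c2 y * a ord0 j| <= 2 * K * `|a| * `|y|.
Proof.
have [h1 h2] := HK y.
have ai := entry_le a i; have aj := entry_le a j.
apply: le_trans (ler_normD _ _) _; rewrite !normrM.
have hy := normr_ge0 y; have ha := normr_ge0 a.
have n1 := normr_ge0 (c1 y); have n2 := normr_ge0 (c2 y).
have n3 := normr_ge0 (a ord0 i); have n4 := normr_ge0 (a ord0 j).
have k0 := ltW K0.
have t1 : `|c1 y| * `|a ord0 i| <= K * `|y| * `|a|.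
  by apply: ler_pM.
have t2 : `|c2 y| * `|a ord0 j| <= K * `|y| * `|a|.
  by apply: ler_pM.
have -> : 2 * K * `|a| * `|y| = K * `|y| * `|a| + K * `|y| * `|a| by ring.
exact: lerD.
Qed.

Lemma opN a y : `|op a y| <= Lop * `|a| * `|y|.
Proof.
rewrite /op; apply: le_trans (ler_normD _ _) _; rewrite !normrZ.
have h1 := coef_bound a y i0 i2; have h2 := coef_bound a y i1 i3.
have e1p := normr_ge0 e1; have e2p := normr_ge0 e2.
have -> : Lop * `|a| * `|y| =
   2 * K * `|a| * `|y| * `|e1| + 2 * K * `|a| * `|y| * `|e2| by rewrite /Lop; ring.
by apply: lerD; apply: ler_wpM2r.
Qed.

Lemma op_operator a : is_operator (op a).
Proof.
split; first by move=> k y y'; exact: opL.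
by exists (Lop * `|a|) => y; exact: opN.
Qed.

Definition mat (T : V -> V) : 'rV[R]_4 :=
  \row_(j < 4) nth 0 [:: c1 (T e1); c2 (T e1); c1 (T e2); c2 (T e2)] j.

Lemma op_mat T : is_operator T -> forall y, op (mat T) y = T y.
Proof.
move=> [TL _] y.
have T0 : T 0 = 0.
  have h := TL 1 0 0; rewrite scaler0 addr0 scale1r in h.
  by have := congr1 (fun v => v - T 0) h; rewrite /= subrr addrK.
have TZ : forall k z, T (k *: z) = k *: T z.
  by move=> k z; have := TL k z 0; rewrite addr0 T0 addr0.
have -> : T y = c1 y *: T e1 + c2 y *: T e2.
  by rewrite {1}(Hco y) TL TZ.
have -> : c1 y *: T e1 + c2 y *: T e2 = c1 y *: (c1 (T e1) *: e1 + c2 (T e1) *: e2)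
   + c2 y *: (c1 (T e2) *: e1 + c2 (T e2) *: e2) by rewrite /c1 /c2 -!Hco.
rewrite /op !mxE /=.
rewrite !scalerDr !scalerA addrACA -!scalerDl.
by congr (_ *: _ + _ *: _); rewrite /c1 /c2; ring.
Qed.


Variables (x0 : V) (f0 : V -> R).
Hypothesis Hxf : in_Pi x0 f0.

Lemma final eps : 0 < eps -> exists eta, 0 < eta /\
  forall T, is_operator T -> num_radius T = 1 -> 1 - eta < `|f0 (T x0)| ->
  exists S, is_operator S /\ num_radius S = 1 /\ `|f0 (S x0)| = 1 /\
    op_norm (fun y => S y - T y) < eps.
Proof.
move=> eps0.
pose p a := num_radius (op a).
pose l a := f0 (op a x0).
pose N a := op_norm (op a).
have Lop0 := Lop_ge0.
have opb : forall a z, `|op a z| <= (Lop * `|a|) * `|z| by move=> a z; exact: opN.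
have pge : forall a, 0 <= p a.
  by move=> a; apply: le_trans (normr_ge0 _) (nr_ub (opb a) Hxf).
have pD : forall a b, p (a + b) <= p a + p b.
  move=> a b; apply: (nr_le Hxf) => y g Pyg.
  rewrite opD (funcD _ _ Pyg.2.1); apply: le_trans (ler_normD _ _) _.
  by apply: lerD; apply: nr_ub Pyg; apply: opb.
have pZle : forall k a, p (k *: a) <= `|k| * p a.
  move=> k a; apply: (nr_le Hxf) => y g Pyg.
  rewrite opZ (funcZ _ _ Pyg.2.1) normrM ler_wpM2l //.
  by apply: nr_ub Pyg; apply: opb.
have pZ : forall k a, p (k *: a) = `|k| * p a.
  move=> k a; apply/eqP; rewrite eq_le pZle /=.
  have [->|k0] := eqVneq k 0; first by rewrite normr0 mul0r pge.
  have := pZle k^-1 (k *: a); rewrite scalerA mulVf // scale1r normfV.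
  by rewrite ler_pdivlMl ?normr_gt0.
have pL : forall a, p a <= Lop * `|a|.
  move=> a; apply: (nr_le Hxf) => y g Pyg.
  apply: le_trans (Pi_le _ Pyg) _; apply: le_trans (opb a y) _.
  by case: Pyg => -> _; rewrite mulr1.
have lD : forall a b, l (a + b) = l a + l b.
  by move=> a b; rewrite /l opD (funcD _ _ Hxf.2.1).
have lp : forall a, `|l a| <= p a by move=> a; exact: nr_ub (opb a) Hxf.
have ND : forall a b, N (a + b) <= N a + N b.
  move=> a b; apply: opn_le => y y1.
  rewrite opD; apply: le_trans (ler_normD _ _) _.
  by apply: lerD; apply: opn_ub y1; apply: opb.
have NL : forall a, N a <= Lop * `|a|.
  move=> a; apply: opn_le => y y1.
  apply: le_trans (opb a y) _.
  by rewrite -[leRHS]mulr1 ler_wpM2l // mulr_ge0.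
have [eta [eta0 Heta]] := main_abs pD pZ pL lD lp ND NL eps0.
exists eta; split => // T Top T1 Tx.
have hT : op (mat T) = T by apply: funext; exact: op_mat.
have pa : p (mat T) = 1 by rewrite /p hT.
have la : 1 - eta < `|l (mat T)| by rewrite /l hT.
have [b [pb [lb Nb]]] := Heta (mat T) pa la.
exists (op b); split; first exact: op_operator.
split => //; split => //.
have -> : (fun y => op b y - T y) = op (b - mat T).
  by apply: funext => y; rewrite opB hT.
exact: Nb.
Qed.

End Concrete.

Theorem mainTheorem9 (R : realType) (V : normedModType R) :
  dim2 V -> has_Lpp_nu V.
Proof.
move=> [e1 [e2 H]].
have [co Hco] := choice H.
have Hco1 : forall x, x = (co x).1 *: e1 + (co x).2 *: e2 by move=> x; case: (Hco x).
have Hun : forall x (ab : R * R), x = ab.1 *: e1 + ab.2 *: e2 -> co x = ab.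
  by move=> x ab h; case: (Hco x) => _; apply.
have [K [K0 HK]] := cbound Hco1 Hun.
move=> eps eps0 x f Pxf.
exact: (final Hco1 Hun K0 HK Pxf eps0).
Qed.
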